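(* Let $(X,\leq)$ be a poset and $K$ a field. (1) If $FI(X,K)$ is Lie solvable, then ${\rm dl}_{Lie}(FI(X,K))={\rm dl}^{Lie}(FI(X,K))=\lceil \log_2(l(X)+1)\rceil+1$. (2) If $\mathcal{U}(FI(X,K))$ is solvable and $K\neq\mathbb{F}_2$, then ${\rm dl}(\mathcal{U}(FI(X,K)))=\lceil \log_2(l(X)+1)\rceil+1$.
   Context: $FI(X,K)$ is the finitary incidence algebra: the $K$-vector space of formal sums $\alpha=\sum_{x\leq y}\alpha_{xy}e_{xy}$ ($x,y\in X$, $\alpha_{xy}\in K$) such that for every pair $x<y$ only finitely many $x\leq u<v\leq y$ have $\alpha_{uv}\neq0$, with convolution product $\alpha\beta=\sum_{x\leq y}\big(\sum_{x\leq z\leq y}\alpha_{xz}\beta_{zy}\big)e_{xy}$; $\mathcal{U}(FI(X,K))$ is its group of units. For a unital associative algebra $A$ with $[x,y]=xy-yx$ (and $UV$, $[U,V]$ denoting spans of products, commutators of elements of subspaces $U,V$): $A^{[0]}=A$, $A^{[n+1]}=[A^{[n]},A^{[n]}]$; $A^{(0)}=A$, $A^{(n+1)}=[A^{(n)},A^{(n)}]A$. $A$ is Lie solvable if some $A^{[n]}=\{0\}$, and then ${\rm dl}_{Lie}(A)$ is the minimal such $n$; ${\rm dl}^{Lie}(A)$ is the minimal $n$ with $A^{(n)}=\{0\}$. For a solvable group $G$, ${\rm dl}(G)$ is its derived length (minimal $n$ with $G^{(n)}$ trivial, $G^{(n)}$ the derived series). $l(X)$ is the supremum of $|C|-1$ over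 finite chains $C\subseteq X$. $\mathbb{F}_2$ is the field with two elements; $\lceil t\rceil$ is the ceiling. *)

(* Defs.v *)
From HB Require Import structures.
From mathcomp Require Import all_boot all_order all_algebra.
From mathcomp Require Import boolp classical_sets cardinality fsbigop.
Set Implicit Arguments. Unset Strict Implicit. Unset Printing Implicit Defensive.
Import Order.TTheory GRing.Theory.
Local Open Scope classical_set_scope.
Local Open Scope ring_scope.

Section FI.
Context {d : Order.disp_t} (X : porderType d) (K : fieldType).

(* formal sums sum_{x<=y} a_xy e_xy, represented by their coefficient function *)
Definition incfun := X -> X -> K.

Definition incidence (a : incfun) : Prop :=
  forall x y, ~ (x <= y)%O -> a x y = 0.

Definition finitary (a : incfun) : Prop :=
  forall x y, (x < y)%O ->
    finite_set [set p : X * X | [/\ (x <= p.1)%O, (p.1 < p.2)%O, (p.2 <= y)%O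
                                 & a p.1 p.2 != 0]].

Definition FI : set incfun := [set a | incidence a /\ finitary a].

(* convolution product; the sum over [x,y] is finitely supported on FI *)
Definition conv (a b : incfun) : incfun := fun x y =>
  if (x <= y)%O then \sum_(z \in [set z : X | (x <= z)%O /\ (z <= y)%O]) a x z * b z y
  else 0.

Definition zerof : incfun := fun _ _ => 0.
Definition delta : incfun := fun x y => if x == y then 1 else 0.

Definition lie (a b : incfun) : incfun := fun x y => conv a b x y - conv b a x y.

Definition span (S : set incfun) : set incfun :=
  [set a | exists s : seq (K * incfun),
      (forall p, p \in s -> S p.2) /\
      a = (fun x y => \sum_(p <- s) p.1 * p.2 x y)].

Definition brack (U V : set incfun) : set incfun :=
  span [set lie u v | u in U & v in V].
Definition prodsp (U V : set incfun) : set incfun :=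
  span [set conv u v | u in U & v in V].

Fixpoint lie_der (n : nat) : set incfun :=
  if n is m.+1 then brack (lie_der m) (lie_der m) else FI.
Fixpoint lie_der_assoc (n : nat) : set incfun :=
  if n is m.+1 then prodsp (brack (lie_der_assoc m) (lie_der_assoc m)) FI else FI.

Definition lie_solvable : Prop := exists n, lie_der n `<=` [set zerof].

Definition dl_Lie_is (n : nat) : Prop :=
  lie_der n `<=` [set zerof] /\ forall m, lie_der m `<=` [set zerof] -> (n <= m)%N.
Definition dl_Lie_assoc_is (n : nat) : Prop :=
  lie_der_assoc n `<=` [set zerof] /\
  forall m, lie_der_assoc m `<=` [set zerof] -> (n <= m)%N.

Definition is_inv (a b : incfun) : Prop :=
  FI b /\ conv a b = delta /\ conv b a = delta.
Definition units : set incfun := [set a | FI a /\ exists b, is_inv a b].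

Inductive gen (S : set incfun) : incfun -> Prop :=
| gen1 : gen S delta
| genM s g : S s -> gen S g -> gen S (conv s g)
| genV s t g : S s -> is_inv s t -> gen S g -> gen S (conv t g).

Definition gcomms (G : set incfun) : set incfun :=
  [set c | exists g h gi hi, [/\ G g, G h, is_inv g gi, is_inv h hi &
     c = conv (conv gi hi) (conv g h)]].

Fixpoint uder (n : nat) : set incfun :=
  if n is m.+1 then gen (gcomms (uder m)) else units.

Definition units_solvable : Prop := exists n, uder n `<=` [set delta].
Definition dl_units_is (n : nat) : Prop :=
  uder n `<=` [set delta] /\ forall m, uder m `<=` [set delta] -> (n <= m)%N.

End FI.

Definition is_chain {d : Order.disp_t} {X : porderType d} (C : seq X) : Prop :=
  uniq C /\ forall x y, x \in C -> y \in C -> (x <= y)%O || (y <= x)%O.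

(* l(X) = n : the supremum of |C|-1 over finite chains C is the finite number n *)
Definition length_is {d : Order.disp_t} (X : porderType d) (n : nat) : Prop :=
  (exists C : seq X, is_chain C /\ size C = n.+1) /\
  (forall C : seq X, is_chain C -> (size C <= n.+1)%N).

(* ceil(log2 m) for m >= 1: the least e with m <= 2^e *)
Definition ceil_log2 (m : nat) : nat := up_log 2 m.

(* Main.v *)
Set Warnings "-all".
Require Import Defs.
From mathcomp Require Import all_boot all_order all_algebra.
From mathcomp Require Import boolp classical_sets cardinality fsbigop.
From mathcomp Require Import ring.
Set Implicit Arguments. Unset Strict Implicit. Unset Printing Implicit Defensive.
Import Order.TTheory GRing.Theory.

Section Chains.
Context {d : Order.disp_t} (X : porderType d).
Local Open Scope classical_set_scope.
Local Open Scope ring_scope.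

Fixpoint reach (n : nat) (x y : X) : Prop :=
  if n is m.+1 then exists z, (x < z)%O /\ reach m z y else x = y.

Definition geR (k : nat) (x y : X) : Prop := exists j, (k <= j)%N /\ reach j x y.

Lemma reach_cat a b x z y : reach a x z -> reach b z y -> reach (a + b) x y.
Proof.
elim: a x => [|a IH] x /=; first by move=> -> .
by move=> [w [xw rw]] rzy; exists w; split => //; apply: IH rzy.
Qed.

Lemma reach_split a b x y : reach (a + b) x y -> exists z, reach a x z /\ reach b z y.
Proof.
elim: a x => [|a IH] x /=; first by move=> r; exists x.
move=> [w [xw rw]]; have [z [r1 r2]] := IH _ rw.
by exists z; split => //; exists w.
Qed.

Lemma reach_le j x y : reach j x y -> (x <= y)%O.
Proof.
elim: j x => [|j IH] x /=; first by move=> ->.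
by move=> [w [xw /IH wy]]; apply: le_trans wy; apply: ltW.
Qed.

Lemma reach_lt j x y : reach j.+1 x y -> (x < y)%O.
Proof. by move=> [w [xw /reach_le wy]]; apply: lt_le_trans wy. Qed.

Lemma reach1 x y : (x < y)%O -> reach 1 x y.
Proof. by move=> xy; exists y. Qed.

Lemma geR_le k x y : geR k x y -> (x <= y)%O.
Proof. by move=> [j [_ /reach_le]]. Qed.

Lemma geR0 x y : (x <= y)%O -> geR 0 x y.
Proof.
rewrite le_eqVlt => /orP[/eqP->|xy]; first by exists 0%N.
by exists 1%N; split => //; apply: reach1.
Qed.

Lemma geR_cat a b x z y : geR a x z -> geR b z y -> geR (a + b) x y.
Proof.
move=> [i [ai ri]] [j [bj rj]]; exists (i + j)%N; split; first exact: leq_add.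
exact: reach_cat rj.
Qed.

Lemma geR_extl k x z y : (x <= z)%O -> geR k z y -> geR k x y.
Proof.
move=> xz gz; have := geR_cat (geR0 xz) gz; by rewrite add0n.
Qed.

Lemma geR_extr k x z y : geR k x z -> (z <= y)%O -> geR k x y.
Proof.
move=> gz zy; have := geR_cat gz (geR0 zy); by rewrite addn0.
Qed.

Lemma geR_mono k k' x y : (k <= k')%N -> geR k' x y -> geR k x y.
Proof. by move=> kk [j [kj r]]; exists j; split => //; apply: leq_trans kj. Qed.

Lemma geR_diag k x : geR k x x -> k = 0%N.
Proof.
move=> [[|j] [kj r]]; first by apply/eqP; rewrite -leqn0.
by have := reach_lt r; rewrite ltxx.
Qed.

Lemma sorted_le_comp (s : seq X) : sorted <=%O s ->
  forall x y, x \in s -> y \in s -> (x <= y)%O || (y <= x)%O.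
Proof.
elim: s => [//|a s IH] /= ps x y.
have ss : sorted <=%O s by apply: path_sorted ps.
have am : all (fun b => (a <= b)%O) s.
  by apply: order_path_min ps; exact: le_trans.
rewrite !inE => /orP[/eqP->|xs] /orP[/eqP->|ys].
- by rewrite lexx.
- by rewrite (allP am y ys).
- by rewrite (allP am x xs) orbT.
- exact: IH.
Qed.

Lemma reach_chain j x y : reach j x y -> exists C : seq X, is_chain C /\ size C = j.+1.
Proof.
have H : forall j x y, reach j x y -> exists C : seq X, path <%O x C /\ size C = j.
  elim=> [|i IH] z w /=; first by move=> _; exists [::].
  move=> [v [zv /IH [C [pC sC]]]]; exists (v :: C); split => /=; last by rewrite sC.
  by rewrite zv.
move=> /H [C [pC sC]]; exists (x :: C); split; last by rewrite /= sC.
have lt : sorted <%O (x :: C) by [].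
move: (lt); rewrite lt_sorted_uniq_le => /andP[u le]; split => //.
exact: sorted_le_comp.
Qed.

Lemma chain_reach (C : seq X) j : is_chain C -> size C = j.+1 -> exists x y, reach j x y.
Proof.
move=> [uC cC] sC.
have tot : {in C &, total <=%O}.
  by move=> a b aC bC; apply: cC.
set s := sort <=%O C.
have ss : sorted <=%O s by apply: (sort_sorted_in tot); apply/allP.
have us : uniq s by rewrite sort_uniq.
have lts : sorted <%O s by rewrite lt_sorted_uniq_le us ss.
have szs : size s = j.+1 by rewrite size_sort.
case: s lts szs {ss us} => [//|a t] /= pt [st]; clear sC.
exists a, (last a t).
elim: t a j pt st => [|b t IH] a j /=; first by move=> _ <-.
move=> /andP[ab pt] st; case: j st => // j [st].
by exists b; split => //; apply: IH.
Qed.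

End Chains.

Section FIS.
Context {d : Order.disp_t} (X : porderType d) (K : fieldType).
Local Open Scope classical_set_scope.
Local Open Scope ring_scope.
Local Notation inc := (incfun X K).
Local Notation conv := (@conv d X K).
Local Notation lie := (@lie d X K).
Local Notation zerof := (@zerof d X K).
Local Notation delta := (@delta d X K).
Local Notation FI := (@FI d X K).

Definition Pk (k : nat) (f : inc) : Prop := forall x y, f x y != 0 -> geR k x y.

Lemma fsbig_ne0 (A : set X) (F : X -> K) :
  \sum_(z \in A) F z != 0 -> exists z, A z /\ F z != 0.
Proof.
move=> H; have [//|nz] := pselect (exists z, A z /\ F z != 0).
exfalso; move: H; rewrite fsbig1 ?eqxx // => z Az.
by apply: contra_notP nz => /eqP Fz; exists z.
Qed.

Lemma conv_ne0 f g x y : conv f g x y != 0 ->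
  (x <= y)%O /\ exists z, ((x <= z)%O /\ (z <= y)%O) /\ f x z * g z y != 0.
Proof.
rewrite /Defs.conv; case: ifP => xy; last by rewrite eqxx.
by move=> /fsbig_ne0 [z [Az nz]]; split => //; exists z.
Qed.

Lemma conv_nle f g x y : ~~ (x <= y)%O -> conv f g x y = 0.
Proof. by rewrite /Defs.conv => /negbTE ->. Qed.

Lemma itv_diag (x : X) : [set z : X | (x <= z)%O /\ (z <= x)%O] = [set x].
Proof.
apply/seteqP; split => z /=; last by move->; rewrite lexx.
by move=> [a b]; apply/le_anti; rewrite a b.
Qed.

Lemma conv_diag f g x : conv f g x x = f x x * g x x.
Proof. by rewrite /Defs.conv lexx itv_diag fsbig_set1. Qed.

Lemma conv_P a b f g : Pk a f -> Pk b g -> Pk (a + b) (conv f g).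
Proof.
move=> Pf Pg x y /conv_ne0 [xy [z [_ nz]]].
have fz : f x z != 0 by apply: contraNneq nz => ->; rewrite mul0r.
have gz : g z y != 0 by apply: contraNneq nz => ->; rewrite mulr0.
exact: geR_cat (Pf _ _ fz) (Pg _ _ gz).
Qed.

Lemma lie_P a b f g : Pk a f -> Pk b g -> Pk (a + b) (lie f g).
Proof.
move=> Pf Pg x y; rewrite /Defs.lie.
have [h|h] := eqVneq (conv f g x y) 0.
  rewrite h sub0r oppr_eq0 => nz; rewrite addnC; exact: conv_P nz.
by move=> _; exact: conv_P h.
Qed.

Lemma lie_P1 f g : Pk 1 (lie f g).
Proof.
move=> x y; rewrite /Defs.lie.
have [<-|xy] := eqVneq x y; first by rewrite !conv_diag mulrC subrr eqxx.
move=> nz0.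
have nz : conv f g x y != 0 \/ conv g f x y != 0.
  have [h|h] := eqVneq (conv f g x y) 0; last by left.
  by move: nz0; rewrite h sub0r oppr_eq0 => nz; right.
have xley : (x <= y)%O by case: nz => /conv_ne0 [].
by exists 1%N; split => //; apply: reach1; rewrite lt_neqAle xy xley.
Qed.

Lemma sum_ne0 (T : eqType) (s : seq T) (F : T -> K) :
  \sum_(p <- s) F p != 0 -> exists2 p, p \in s & F p != 0.
Proof.
move=> H; have [//|nz] := pselect (exists2 p, p \in s & F p != 0).
exfalso; move: H; rewrite big1_seq ?eqxx // => p /= ps.
by apply: contra_notP nz => /eqP Fz; exists p.
Qed.

Lemma span_P k (S : set inc) : (forall f, S f -> Pk k f) ->
  forall g, Defs.span S g -> Pk k g.
Proof.
move=> SP g [s [sS ->]] x y /= /sum_ne0 [p ps nz].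
by apply: (SP _ (sS _ ps)); apply: contraNneq nz => ->; rewrite mulr0.
Qed.

Lemma FI_P0 f : FI f -> Pk 0 f.
Proof.
move=> [hinc _] x y nz; apply: geR0.
by case xy: (x <= y)%O => //; move: nz; rewrite hinc ?eqxx // xy.
Qed.

Lemma brack_P a b (U V : set inc) : (forall u, U u -> Pk a u) -> (forall v, V v -> Pk b v) ->
  forall f, brack U V f -> Pk (a + b) f.
Proof.
move=> UP VP; apply: span_P => f [u Uu [v Vv <-]].
exact: lie_P (UP _ Uu) (VP _ Vv).
Qed.

Lemma prodsp_P a b (U V : set inc) : (forall u, U u -> Pk a u) -> (forall v, V v -> Pk b v) ->
  forall f, prodsp U V f -> Pk (a + b) f.
Proof.
move=> UP VP; apply: span_P => f [u Uu [v Vv <-]].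
exact: conv_P (UP _ Uu) (VP _ Vv).
Qed.

Lemma expn2S n : (2 ^ n + 2 ^ n = 2 ^ n.+1)%N.
Proof. by rewrite expnS mul2n addnn. Qed.

Lemma lie_der_P n : forall f, lie_der (X:=X) (K:=K) n.+1 f -> Pk (2 ^ n) f.
Proof.
elim: n => [|n IH] f /=.
  by apply: span_P => g [u _ [v _ <-]]; apply: lie_P1.
by rewrite -expn2S; apply: brack_P; apply: IH.
Qed.

Lemma lie_der_assoc_P n : forall f, lie_der_assoc (X:=X) (K:=K) n.+1 f -> Pk (2 ^ n) f.
Proof.
elim: n => [|n IH] f /=.
  rewrite -[(2 ^ 0)%N]addn0; apply: prodsp_P; last exact: FI_P0.
  by apply: span_P => g [u _ [v _ <-]]; apply: lie_P1.
rewrite -[(2 ^ n.+1)%N]addn0; apply: prodsp_P; last exact: FI_P0.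
by rewrite -expn2S; apply: brack_P; apply: IH.
Qed.

Lemma geR_bound l k (x y : X) : length_is X l -> (l < k)%N -> ~ geR k x y.
Proof.
move=> [_ Hl] lk [j [kj r]]; have [C [cC sC]] := reach_chain r.
have := Hl C cC; rewrite sC ltnS => jl.
by have := leq_trans lk (leq_trans kj jl); rewrite ltnn.
Qed.

Lemma Pk_zero l k f : length_is X l -> (l < k)%N -> Pk k f -> f = zerof.
Proof.
move=> Hl lk Pf; apply: funext => x; apply: funext => y.
have [//|nz] := eqVneq (f x y) 0.
by case: (geR_bound Hl lk (x:=x) (y:=y)); apply: Pf.
Qed.

Definition Eu (a b : X) : inc := fun x y => if (x == a) && (y == b) then 1 else 0.

Lemma FI_Eu a b : (a <= b)%O -> FI (Eu a b).
Proof.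
move=> ab; split.
  move=> x y nxy; rewrite /Eu; case: andP => // [[/eqP xa /eqP yb]].
  by case: nxy; rewrite xa yb.
move=> x y _; apply: sub_finite_set (finite_set1 (a, b)) => -[u v] /= [_ _ _].
by rewrite /Eu; case: andP => [[/eqP-> /eqP->]|]; rewrite ?eqxx.
Qed.

Lemma FI_delta : FI delta.
Proof.
split.
  move=> x y nxy; rewrite /Defs.delta; case: eqP => // xy.
  by case: nxy; rewrite xy lexx.
move=> x y _; apply: sub_finite_set (finite_set0 _) => -[u v] /= [_ uv _].
by rewrite /Defs.delta (lt_eqF uv) eqxx.
Qed.

Lemma Eu_neq0 a b : Eu a b != zerof.
Proof.
apply/eqP => /(congr1 (fun f => f a b)); rewrite /Eu /Defs.zerof !eqxx /=.
by apply/eqP; rewrite oner_eq0.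
Qed.



Lemma fsbig_single (A : set X) (F : X -> K) b : A b ->
  (forall z, A z -> z <> b -> F z = 0) -> \sum_(z \in A) F z = F b.
Proof.
move=> Ab H; rewrite -(fsbig_widen [set b] A F) ?fsbig_set1 //.
  by move=> z ->.
by move=> z [Az /= zb]; apply: H.
Qed.

Lemma conv_Eu_l a b g : (a <= b)%O -> incidence g ->
  conv (Eu a b) g = fun x y => if x == a then g b y else 0.
Proof.
move=> ab ig; apply: funext => x; apply: funext => y.
rewrite /Defs.conv; case: eqP => [xa|xa]; last first.
  case: ifP => // _; rewrite fsbig1 // => z _.
  by rewrite /Eu; case: eqP => // ; rewrite mul0r.
subst x; case: ifP => ay; last first.
  have [bly|nby] := boolP (b <= y)%O; first by rewrite (le_trans ab bly) in ay.
  by rewrite ig //; apply/negP.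
have [bly|nby] := boolP (b <= y)%O.
  rewrite (fsbig_single (b:=b)) /Eu ?eqxx ?mul1r //.
  by move=> z _ zb; case: eqP => // _; rewrite mul0r.
rewrite fsbig1; first by rewrite ig //; apply/negP.
move=> z [_ zy]; rewrite /Eu eqxx /=; case: eqP => [zb|]; last by rewrite mul0r.
by subst z; rewrite zy in nby.
Qed.

Lemma conv_Eu_r a b g : (a <= b)%O -> incidence g ->
  conv g (Eu a b) = fun x y => if y == b then g x a else 0.
Proof.
move=> ab ig; apply: funext => x; apply: funext => y.
rewrite /Defs.conv; case: (y =P b) => [yb|yb]; last first.
  case: ifP => // _; rewrite fsbig1 // => z _.
  by rewrite /Eu (introF eqP yb) andbF mulr0.
subst y; case: ifP => xb; last first.
  have [xa|nxa] := boolP (x <= a)%O; first by rewrite (le_trans xa ab) in xb.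
  by rewrite ig //; apply/negP.
have [xa|nxa] := boolP (x <= a)%O.
  rewrite (fsbig_single (b:=a)) /Eu ?eqxx ?mulr1 //.
  by move=> z _ za; rewrite ?andbT; case: eqP => // _; rewrite mulr0.
rewrite fsbig1; first by rewrite ig //; apply/negP.
move=> z [xz _]; rewrite /Eu eqxx andbT; case: eqP => [za|]; last by rewrite mulr0.
by subst z; rewrite xz in nxa.
Qed.

Lemma span1 (S : set inc) f : S f -> Defs.span S f.
Proof.
move=> Sf; exists [:: (1, f)]; split.
  by move=> p; rewrite inE => /eqP ->.
by apply: funext => x; apply: funext => y; rewrite big_seq1 mul1r.
Qed.

Lemma lie_EE x m y : (x <= m)%O -> (m <= y)%O -> x != y ->
  lie (Eu x m) (Eu m y) = Eu x y.
Proof.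
move=> xm my xy; have [ix _] := FI_Eu xm; have [iy _] := FI_Eu my.
apply: funext => a; apply: funext => b; rewrite /Defs.lie !conv_Eu_l //.
rewrite /Eu eqxx /= [y == x]eq_sym (negbTE xy) /=.
by case: (a == x); case: (a == m); rewrite /= ?subr0.
Qed.

Lemma conv_E_yy x y : (x <= y)%O -> conv (Eu x y) (Eu y y) = Eu x y.
Proof.
move=> xy; have [ix _] := FI_Eu xy.
apply: funext => a; apply: funext => b; rewrite conv_Eu_r //.
rewrite /Eu; case: (b =P y) => [eb|nb]; first by rewrite !eqxx !andbT.
by rewrite andbF.
Qed.

Lemma reach_pos j (x y : X) : (0 < j)%N -> reach j x y -> (x < y)%O.
Proof. by case: j => // j _; apply: reach_lt. Qed.

Lemma reach_split2 n j (x y : X) : (2 ^ n.+1 <= j)%N -> reach j x y ->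
  exists m, [/\ (2 ^ n <= 2 ^ n)%N, (2 ^ n <= j - 2 ^ n)%N, reach (2 ^ n) x m &
    reach (j - 2 ^ n) m y].
Proof.
move=> nj r; have h : (2 ^ n <= 2 ^ n.+1)%N by rewrite -expn2S leq_addr.
have e : j = (2 ^ n + (j - 2 ^ n))%N.
  by rewrite subnKC //; apply: leq_trans nj.
rewrite e in r; have [m [r1 r2]] := reach_split r.
exists m; split => //; rewrite leq_subRL ?expn2S //.
by apply: leq_trans nj.
Qed.

Lemma lie_der_lb n : forall j (x y : X), (2 ^ n <= j)%N -> reach j x y ->
  lie_der (X:=X) (K:=K) n.+1 (Eu x y).
Proof.
elim: n => [|n IH] j x y nj r.
  have xy := reach_pos nj r.
  apply: span1; exists (Eu x x) => //; first exact: FI_Eu.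
  exists (Eu x y); first by apply: FI_Eu; apply: ltW.
  by rewrite lie_EE ?lexx ?ltW // lt_eqF.
have [m [_ h2 r1 r2]] := reach_split2 nj r.
have p2 : (0 < 2 ^ n)%N by rewrite expn_gt0.
have xm := reach_pos p2 r1.
have my := reach_pos (leq_trans p2 h2) r2.
apply: span1; exists (Eu x m); first exact: IH r1.
exists (Eu m y); first exact: IH r2.
by rewrite lie_EE ?ltW // lt_eqF // (lt_trans xm my).
Qed.

Lemma lie_der_assoc_lb n : forall j (x y : X), (2 ^ n <= j)%N -> reach j x y ->
  lie_der_assoc (X:=X) (K:=K) n.+1 (Eu x y).
Proof.
elim: n => [|n IH] j x y nj r.
  have xy := reach_pos nj r.
  apply: span1; exists (Eu x y); last first.
    by exists (Eu y y); [apply: FI_Eu | rewrite conv_E_yy // ltW].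
  apply: span1; exists (Eu x x) => //; first exact: FI_Eu.
  exists (Eu x y); first by apply: FI_Eu; apply: ltW.
  by rewrite lie_EE ?lexx ?ltW // lt_eqF.
have [m [_ h2 r1 r2]] := reach_split2 nj r.
have p2 : (0 < 2 ^ n)%N by rewrite expn_gt0.
have xm := reach_pos p2 r1.
have my := reach_pos (leq_trans p2 h2) r2.
have xy := lt_trans xm my.
apply: span1; exists (Eu x y); last first.
  by exists (Eu y y); [apply: FI_Eu | rewrite conv_E_yy // ltW].
apply: span1; exists (Eu x m); first exact: IH r1.
exists (Eu m y); first exact: IH r2.
by rewrite lie_EE ?ltW // lt_eqF.
Qed.

Lemma fsbig_eq_on (A B C : set X) (F G : X -> K) : C `<=` A -> C `<=` B ->
  (forall z, A z -> ~ C z -> F z = 0) -> (forall z, B z -> ~ C z -> G z = 0) ->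
  (forall z, C z -> F z = G z) -> \sum_(z \in A) F z = \sum_(z \in B) G z.
Proof.
move=> CA CB HF HG FG.
rewrite -(fsbig_widen C A F) // -?(fsbig_widen C B G) //.
- by apply: eq_fsbigr => z /set_mem; apply: FG.
- by move=> z [Bz nCz]; apply: HG.
- by move=> z [Az nCz]; apply: HF.
Qed.

Definition LF (f : inc) (x y : X) := [set z : X | ((x <= z)%O /\ (z <= y)%O) /\ f x z != 0].
Definition RF (f : inc) (x y : X) := [set z : X | ((x <= z)%O /\ (z <= y)%O) /\ f z y != 0].

Lemma LF_fin f x y : FI f -> finite_set (LF f x y).
Proof.
move=> [_ fin]; have [xy|nxy] := boolP (x < y)%O; last first.
  apply: sub_finite_set (finite_set1 x) => z [[xz zy] _] /=.
  apply/le_anti; rewrite xz andbT; apply: contraNT nxy => nzx.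
  by rewrite lt_neqAle (le_trans xz zy) andbT; apply: contraNneq nzx => ->.
have F2 := finite_image snd (fin x y xy).
apply: (@sub_finite_set _ _ ([set x] `|` [set p.2 | p in
   [set p : X * X | [/\ (x <= p.1)%O, (p.1 < p.2)%O, (p.2 <= y)%O & f p.1 p.2 != 0]]])).
  move=> z [[xz zy] nz]; have [->|zx] := eqVneq z x; first by left.
  right; exists (x, z) => //=; split => //; rewrite lt_neqAle xz andbT.
  by rewrite eq_sym.
by rewrite finite_setU; split => //; apply: finite_set1.
Qed.

Lemma RF_fin f x y : FI f -> finite_set (RF f x y).
Proof.
move=> [_ fin]; have [xy|nxy] := boolP (x < y)%O; last first.
  apply: sub_finite_set (finite_set1 y) => z [[xz zy] _] /=.
  apply/le_anti; rewrite zy /=; apply: contraNT nxy => nzx.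
  by rewrite lt_neqAle (le_trans xz zy) andbT; apply: contraNneq nzx => <-.
have F2 := finite_image fst (fin x y xy).
apply: (@sub_finite_set _ _ ([set y] `|` [set p.1 | p in
   [set p : X * X | [/\ (x <= p.1)%O, (p.1 < p.2)%O, (p.2 <= y)%O & f p.1 p.2 != 0]]])).
  move=> z [[xz zy] nz]; have [->|zy'] := eqVneq z y; first by left.
  right; exists (z, y) => //=; split => //; rewrite lt_neqAle zy andbT.
  by [].
by rewrite finite_setU; split => //; apply: finite_set1.
Qed.

Definition fset_of (f : inc) (x y : X) := [set p : X * X |
  [/\ (x <= p.1)%O, (p.1 < p.2)%O, (p.2 <= y)%O & f p.1 p.2 != 0]].

Lemma mul_ne0 (a b : K) : a * b != 0 -> a != 0 /\ b != 0.
Proof.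
move=> nz; split; first by apply: contraNneq nz => ->; rewrite mul0r.
by apply: contraNneq nz => ->; rewrite mulr0.
Qed.

Lemma FI_conv f g : FI f -> FI g -> FI (conv f g).
Proof.
move=> [If Ff] [Ig Fg]; split.
  by move=> x y nxy; apply: conv_nle; apply/negP.
move=> x y xy; have Sf : finite_set (fset_of f x y) by apply: Ff.
have Sg : finite_set (fset_of g x y) by apply: Fg.
apply: (@sub_finite_set _ _ (fset_of f x y `|` fset_of g x y `|`
   [set (p.1, q.2) | p in fset_of f x y & q in fset_of g x y])); last first.
  by rewrite !finite_setU; split; [split|apply: finite_image2].
move=> [u v] /= [xu uv vy /conv_ne0 [_ [w [[uw wv] /mul_ne0 [fw gw]]]]].
have [ew|nuw] := eqVneq u w.
  by subst w; left; right; rewrite /fset_of /=; split.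
have [ev|nwv] := eqVneq w v.
  by subst w; left; left; rewrite /fset_of /=; split.
right; exists (u, w); first by split => //=; [rewrite lt_neqAle nuw | apply: le_trans vy].
by exists (w, v) => //; split => //=; [exact: le_trans uw | rewrite lt_neqAle nwv wv].
Qed.

Lemma conv_assoc a b c : FI a -> FI b -> FI c ->
  conv (conv a b) c = conv a (conv b c).
Proof.
move=> Fa Fb Fc; apply: funext => x; apply: funext => y.
have [xy|nxy] := boolP (x <= y)%O; last by rewrite !conv_nle.
set W := LF a x y; set Z := RF c x y.
have Wf : finite_set W by apply: LF_fin.
have Zf : finite_set Z by apply: RF_fin.
pose G w z := if (w <= z)%O then a x w * b w z * c z y else 0.
have -> : conv (conv a b) c x y = \sum_(z \in Z) \sum_(w \in W) G w z.
  rewrite /Defs.conv xy; apply: (fsbig_eq_on (C := Z)).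
  - by move=> z [].
  - by [].
  - move=> z Iz nZ; suff -> : c z y = 0 by rewrite mulr0.
    by apply/eqP; apply: contra_notT nZ => nz; split.
  - by [].
  move=> z [[xz zy] _]; rewrite -/(Defs.conv a b x z) /Defs.conv xz mulr_fsuml.
  apply: (fsbig_eq_on (C := [set w | (x <= w)%O /\ (w <= z)%O] `&` W)).
  - by move=> w [].
  - by move=> w [].
  - move=> w [xw wz] nC; suff -> : a x w = 0 by rewrite !mul0r.
    apply/eqP; apply: contra_notT nC => nz; split => //; split => //.
    by split => //; apply: le_trans zy.
  - move=> w [[xw wy] nz] nC; rewrite /G; case: ifP => // wz.
    by case: nC; split.
  by move=> w [[xw wz] _]; rewrite /G wz.
have -> : conv a (conv b c) x y = \sum_(w \in W) \sum_(z \in Z) G w z.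
  rewrite /Defs.conv xy; apply: (fsbig_eq_on (C := W)).
  - by move=> z [].
  - by [].
  - move=> z Iz nZ; suff -> : a x z = 0 by rewrite mul0r.
    by apply/eqP; apply: contra_notT nZ => nz; split.
  - by [].
  move=> w [[xw wy] _]; rewrite -/(Defs.conv b c w y) /Defs.conv wy mulr_fsumr.
  apply: (fsbig_eq_on (C := [set z | (w <= z)%O /\ (z <= y)%O] `&` Z)).
  - by move=> z [].
  - by move=> z [].
  - move=> z [wz zy] nC; suff -> : c z y = 0 by rewrite !mulr0.
    apply/eqP; apply: contra_notT nC => nz; split => //; split => //.
    by split => //; apply: le_trans wz.
  - move=> z [[xz zy] nz] nC; rewrite /G; case: ifP => // wz.
    by case: nC; split.
  by move=> z [[wz zy] _]; rewrite /G wz mulrA.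
by rewrite exchange_fsbig.
Qed.
Local Notation is_inv := (@is_inv d X K).

Definition Qk (k : nat) (f : inc) : Prop := forall x y, ~ geR k x y -> f x y = delta x y.

Lemma Qk_ne k f x y : Qk k f -> f x y != delta x y -> geR k x y.
Proof.
move=> Q nz; have [//|ng] := pselect (geR k x y).
by rewrite Q // eqxx in nz.
Qed.

Lemma delta_diag x : delta x x = 1.
Proof. by rewrite /Defs.delta eqxx. Qed.

Lemma delta_nle x y : ~~ (x <= y)%O -> delta x y = 0.
Proof.
rewrite /Defs.delta; case: eqP => // ->; by rewrite lexx.
Qed.

Lemma conv_delta_l g : incidence g -> conv delta g = g.
Proof.
move=> Ig; apply: funext => x; apply: funext => y.
have [xy|nxy] := boolP (x <= y)%O; last by rewrite conv_nle // Ig //; apply/negP.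
rewrite /Defs.conv xy (fsbig_single (b:=x)) ?delta_diag ?mul1r //=.
by move=> z _ zx; rewrite /Defs.delta; case: eqP => [xz|_]; [case: zx; rewrite xz | rewrite mul0r].
Qed.

Lemma conv_delta_r g : incidence g -> conv g delta = g.
Proof.
move=> Ig; apply: funext => x; apply: funext => y.
have [xy|nxy] := boolP (x <= y)%O; last by rewrite conv_nle // Ig //; apply/negP.
rewrite /Defs.conv xy (fsbig_single (b:=y)) ?delta_diag ?mulr1 //=.
by move=> z _ zy; rewrite /Defs.delta; case: eqP => [xz|_]; [case: zy; rewrite xz | rewrite mulr0].
Qed.

Lemma Qk_conv k s g : Qk k s -> Qk k g -> Qk k (conv s g).
Proof.
move=> Qs Qg x y ng; have [xy|nxy] := boolP (x <= y)%O; last first.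
  by rewrite conv_nle // delta_nle.
rewrite /Defs.conv xy (eq_fsbigr (fun z => delta x z * g z y)).
  rewrite (fsbig_single (b:=x)) ?delta_diag ?mul1r ?Qg //=.
  by move=> z _ zx; rewrite /Defs.delta; case: eqP => [xz|_]; [case: zx; rewrite xz | rewrite mul0r].
move=> z /set_mem [xz zy]; rewrite Qs // => gz; apply: ng; exact: geR_extr gz zy.
Qed.

Lemma Qk_inv k s t : Qk k s -> incidence t -> conv t s = delta -> Qk k t.
Proof.
move=> Qs It ts x y ng; have [xy|nxy] := boolP (x <= y)%O; last first.
  by rewrite It ?delta_nle //; apply/negP.
have := congr1 (fun f => f x y) ts; rewrite /Defs.conv xy => <-.
rewrite (eq_fsbigr (fun z => t x z * delta z y)).
  rewrite (fsbig_single (b:=y)) ?delta_diag ?mulr1 //=.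
  by move=> z _ zy; rewrite /Defs.delta; case: eqP => [xz|_]; [case: zy; rewrite xz | rewrite mulr0].
move=> z /set_mem [xz zy]; rewrite Qs // => gz; apply: ng; exact: geR_extl xz gz.
Qed.

Lemma inv_diag g gi x : is_inv g gi -> gi x x * g x x = 1.
Proof.
move=> [_ [_ e]]; have := congr1 (fun f => f x x) e.
by rewrite /= conv_diag delta_diag.
Qed.

Lemma comm_Q1 g h gi hi : is_inv g gi -> is_inv h hi ->
  Qk 1 (conv (conv gi hi) (conv g h)).
Proof.
move=> ig ih x y ng; have [<-|xy] := eqVneq x y.
  by rewrite !conv_diag delta_diag mulrACA (inv_diag x ig) (inv_diag x ih) mulr1.
have nxy : ~~ (x <= y)%O.
  apply/negP => xly; apply: ng; exists 1%N; split => //; apply: reach1.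
  by rewrite lt_neqAle xy.
by rewrite conv_nle // delta_nle.
Qed.

Lemma fsbig_pair (A : set X) (F : X -> K) a b : A a -> A b -> a != b ->
  (forall z, A z -> z <> a -> z <> b -> F z = 0) -> \sum_(z \in A) F z = F a + F b.
Proof.
move=> Aa Ab ab H; rewrite -(fsbig_widen ([set a] `|` [set b]) A F).
- rewrite fsbigU0 ?fsbig_set1 //; try exact: finite_set1.
  by move=> z [/= -> bz]; move: ab; rewrite bz eqxx.
- by move=> z [->|->].
- by move=> z [Az /not_orP [za zb]]; apply: H.
Qed.

Lemma comm_gh k g h x y : (0 < k)%N -> Qk k g -> Qk k h -> ~ geR (k + k) x y ->
  conv g h x y = conv h g x y.
Proof.
move=> k0 Qg Qh ng; have [<-|xy] := eqVneq x y; first by rewrite !conv_diag mulrC.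
have [xly|nxy] := boolP (x <= y)%O; last by rewrite !conv_nle.
have dx : forall f, Qk k f -> f x x = 1.
  by move=> f Qf; rewrite Qf ?delta_diag // => /geR_diag k00; rewrite k00 in k0.
have dy : forall f, Qk k f -> f y y = 1.
  by move=> f Qf; rewrite Qf ?delta_diag // => /geR_diag k00; rewrite k00 in k0.
have key : forall f1 f2, Qk k f1 -> Qk k f2 -> conv f1 f2 x y = f2 x y + f1 x y.
  move=> f1 f2 Q1 Q2; rewrite /Defs.conv xly (fsbig_pair (a:=x) (b:=y)) //=.
  - by rewrite dx // dy // mul1r mulr1.
  move=> z [xz zy] zx zyn.
  have [e1|n1] := eqVneq (f1 x z) 0; first by rewrite e1 mul0r.
  have [e2|n2] := eqVneq (f2 z y) 0; first by rewrite e2 mulr0.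
  exfalso; apply: ng; apply: (geR_cat (z:=z)).
    apply: Qk_ne Q1 _; rewrite /Defs.delta.
    by case: (x =P z) => [e|_]; [case: zx; rewrite e | exact: n1].
  apply: Qk_ne Q2 _; rewrite /Defs.delta.
  by case: (z =P y) => [e|_]; [case: zyn | exact: n2].
by rewrite !key // addrC.
Qed.

Lemma conv_congr_r u f f' x y : (forall z, (x <= z)%O -> (z <= y)%O -> f z y = f' z y) ->
  conv u f x y = conv u f' x y.
Proof.
move=> H; have [xy|nxy] := boolP (x <= y)%O; last by rewrite !conv_nle.
rewrite /Defs.conv xy; apply: eq_fsbigr => z /set_mem [xz zy].
by rewrite H.
Qed.

Lemma comm_Q k g h gi hi : (0 < k)%N -> FI g -> FI h -> Qk k g -> Qk k h ->
  is_inv g gi -> is_inv h hi -> Qk (k + k) (conv (conv gi hi) (conv g h)).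
Proof.
move=> k0 Fg Fh Qg Qh [Fgi [ggi gig]] [Fhi [hhi hih]] x y ng.
have e : conv (conv gi hi) (conv h g) = delta.
  rewrite conv_assoc //; last exact: FI_conv.
  rewrite -(conv_assoc Fhi Fh Fg) hih conv_delta_l ?gig //.
  by case: Fg.
rewrite -e; apply: conv_congr_r => z xz zy.
rewrite (comm_gh k0 Qg Qh) // => gz; apply: ng; exact: geR_extl xz gz.
Qed.

Local Notation units := (@units d X K).
Local Notation gen := (@gen d X K).
Local Notation uder := (@uder d X K).

Lemma gen_Q k (S : set inc) : (forall s, S s -> Qk k s /\ FI s) ->
  forall g, gen S g -> Qk k g /\ FI g.
Proof.
move=> HS g; elim => [|s g0 Ss _ [Qg Fg]|s t g0 Ss [Ft [st ts]] _ [Qg Fg]].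
- by split; [move=> x y _ | exact: FI_delta].
- by have [Qs Fs] := HS _ Ss; split; [exact: Qk_conv | exact: FI_conv].
- have [Qs Fs] := HS _ Ss; have Qt : Qk k t by apply: Qk_inv Qs _ ts; case: Ft.
  by split; [exact: Qk_conv | exact: FI_conv].
Qed.

Lemma uder_Q n : forall f, uder n.+1 f -> Qk (2 ^ n) f /\ FI f.
Proof.
elim: n => [|n IH] f /=; apply: gen_Q => c [g [h [gi [hi [Ug Uh ig ih ->]]]]].
  split; first exact: comm_Q1.
  by apply: FI_conv; apply: FI_conv; [case: ig | case: ih | case: Ug | case: Uh].
have [Qg Fg] := IH _ Ug; have [Qh Fh] := IH _ Uh.
split; first by rewrite -expn2S; apply: comm_Q => //; rewrite expn_gt0.
by apply: FI_conv; apply: FI_conv; [case: ig | case: ih | by [] | by []].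
Qed.

Lemma uder_FI n f : uder n f -> FI f.
Proof. by case: n => [[]|n /uder_Q []]. Qed.

Lemma Qk_delta l k f : length_is X l -> (l < k)%N -> Qk k f -> f = delta.
Proof.
move=> Hl lk Qf; apply: funext => x; apply: funext => y.
by apply: Qf; apply: geR_bound Hl lk.
Qed.

Definition U (c : K) (a b : X) : inc := fun x y => delta x y + c * Eu a b x y.

Lemma FI_U c a b : (a <= b)%O -> FI (U c a b).
Proof.
move=> ab; have [Id Fd] := FI_delta; have [Ie Fe] := FI_Eu ab; split.
  by move=> x y nxy; rewrite /U Id // Ie // mulr0 addr0.
move=> x y xy; apply: (@sub_finite_set _ _ (fset_of delta x y `|` fset_of (Eu a b) x y)).
  move=> [u v] [xu uv vy nz] /=.
  have [e|ne] := eqVneq (delta u v) 0; last by left.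
  right; split => //; move: nz; rewrite /U e add0r; apply: contraNneq => ->.
  by rewrite mulr0.
by rewrite finite_setU; split; [apply: Fd | apply: Fe].
Qed.

Lemma conv_lin_l f1 f2 c g : FI f1 -> FI f2 ->
  conv (fun x y => f1 x y + c * f2 x y) g = fun x y => conv f1 g x y + c * conv f2 g x y.
Proof.
move=> F1 F2; apply: funext => x; apply: funext => y.
have [xy|nxy] := boolP (x <= y)%O; last by rewrite !conv_nle // mulr0 addr0.
rewrite /Defs.conv xy.
set B := LF f1 x y `|` LF f2 x y.
have Bf : finite_set B by rewrite finite_setU; split; apply: LF_fin.
have BI : B `<=` [set z | (x <= z)%O /\ (z <= y)%O] by move=> z [[]|[]].
have out : forall z, (x <= z)%O /\ (z <= y)%O -> ~ B z -> f1 x z = 0 /\ f2 x z = 0.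
  move=> z Iz nB; split; apply/eqP; apply: contra_notT nB => nz; [left|right]; by split.
rewrite -!(fsbig_widen B _ _ BI).
all: try (move=> z [Iz nB]; have [e1 e2] := out z Iz nB;
  by rewrite /= ?e1 ?e2 ?mul0r ?mulr0 ?addr0 ?mul0r).
rewrite mulr_fsumr -fsbig_split //; apply: eq_fsbigr => z _.
by rewrite mulrDl mulrA.
Qed.

Lemma conv_U_l c a b g : (a <= b)%O -> incidence g ->
  conv (U c a b) g = fun x y => g x y + c * (if x == a then g b y else 0).
Proof.
move=> ab Ig; have Fd := FI_delta; have Fe := FI_Eu ab.
by rewrite /U (conv_lin_l c g Fd Fe) conv_delta_l // conv_Eu_l.
Qed.

Lemma conv_inc f g : incidence (conv f g).
Proof. by move=> x y nxy; apply: conv_nle; apply/negP. Qed.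

Ltac splitall := repeat (case: eqP => [?|?]; try subst;
  try (exfalso; match goal with H : ?z <> ?z |- _ => by apply: H end)).

Lemma inv_U p a b : (a <= b)%O -> a <> b -> is_inv (U p a b) (U (-p) a b).
Proof.
move=> ab nab; have F1 := FI_U p ab; have F2 := FI_U (-p) ab.
split => //; split.
  rewrite (conv_U_l p ab (proj1 F2)).
  apply: funext => u; apply: funext => v; rewrite /U /Eu /Defs.delta.
  splitall; simpl; ring.
rewrite (conv_U_l (-p) ab (proj1 F1)).
apply: funext => u; apply: funext => v; rewrite /U /Eu /Defs.delta.
splitall; simpl; ring.
Qed.

Lemma comm_UU p q x m y : (x <= m)%O -> (m <= y)%O -> x <> m -> m <> y -> x <> y ->
  conv (conv (U (-p) x m) (U (-q) m y)) (conv (U p x m) (U q m y)) = U (p * q) x y.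
Proof.
move=> xm my nxm nmy nxy.
rewrite (conv_assoc (FI_U _ xm) (FI_U _ my) (FI_conv (FI_U _ xm) (FI_U _ my))).
rewrite (conv_U_l (-p) xm (conv_inc _ _)).
rewrite (conv_U_l (-q) my (conv_inc _ _)).
rewrite (conv_U_l p xm (proj1 (FI_U q my))).
apply: funext => u; apply: funext => v; rewrite /U /Eu /Defs.delta.
splitall; simpl; ring.
Qed.

Lemma inv_Ud (a : K) x : a != 0 -> is_inv (U (a - 1) x x) (U (a^-1 - 1) x x).
Proof.
move=> a0; have F1 := FI_U (a - 1) (lexx x); have F2 := FI_U (a^-1 - 1) (lexx x).
split => //; split.
  rewrite (conv_U_l _ (lexx x) (proj1 F2)).
  apply: funext => u; apply: funext => v; rewrite /U /Eu /Defs.delta.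
  splitall; simpl; field; exact: a0.
rewrite (conv_U_l _ (lexx x) (proj1 F1)).
apply: funext => u; apply: funext => v; rewrite /U /Eu /Defs.delta.
splitall; simpl; field; exact: a0.
Qed.

Lemma comm_base (a : K) x y : a != 0 -> (x <= y)%O -> x <> y ->
  conv (conv (U (a^-1 - 1) x x) (U (-1) x y)) (conv (U (a - 1) x x) (U 1 x y))
  = U (1 - a^-1) x y.
Proof.
move=> a0 xy nxy.
rewrite (conv_assoc (FI_U _ (lexx x)) (FI_U _ xy) (FI_conv (FI_U _ (lexx x)) (FI_U _ xy))).
rewrite (conv_U_l _ (lexx x) (conv_inc _ _)).
rewrite (conv_U_l _ xy (conv_inc _ _)).
rewrite (conv_U_l _ (lexx x) (proj1 (FI_U 1 xy))).
apply: funext => u; apply: funext => v; rewrite /U /Eu /Defs.delta.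
splitall; simpl; field; exact: a0.
Qed.

Local Notation gcomms := (@gcomms d X K).

Lemma units_U p a b : (a <= b)%O -> a <> b -> units (U p a b).
Proof. by move=> ab nab; split; [apply: FI_U | exists (U (-p) a b); apply: inv_U]. Qed.

Lemma units_Ud (a : K) x : a != 0 -> units (U (a - 1) x x).
Proof. by move=> a0; split; [apply: FI_U | exists (U (a^-1 - 1) x x); apply: inv_Ud]. Qed.

Lemma gen_in (S : set inc) f : S f -> incidence f -> gen S f.
Proof.
move=> Sf If; have := genM Sf (gen1 S); by rewrite conv_delta_r.
Qed.

Lemma U_neq_delta k x y : x <> y -> k != 0 -> U k x y <> delta.
Proof.
move=> nxy k0 /(congr1 (fun f => f x y)); rewrite /U /Eu /Defs.delta !eqxx /=.
case: eqP => // _; rewrite add0r mulr1 => e; by rewrite e eqxx in k0.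
Qed.

Lemma Ud_neq_delta (a : K) x : a != 1 -> U (a - 1) x x <> delta.
Proof.
move=> a1 /(congr1 (fun f => f x x)); rewrite /U /Eu /Defs.delta !eqxx /= mulr1.
rewrite addrC subrK => e; by rewrite e eqxx in a1.
Qed.

Lemma uder_lb (a : K) : a != 0 -> a != 1 -> forall n j (x y : X),
  (2 ^ n <= j)%N -> reach j x y -> exists k : K, k != 0 /\ uder n.+1 (U k x y).
Proof.
move=> a0 a1; elim => [|n IH] j x y nj r.
  have xy := reach_pos nj r; have nxy : x <> y by move=> e; rewrite e ltxx in xy.
  exists (1 - a^-1); split.
    by rewrite subr_eq0 eq_sym invr_eq1.
  apply: gen_in; last by case: (FI_U (1 - a^-1) (ltW xy)).
  exists (U (a - 1) x x), (U 1 x y), (U (a^-1 - 1) x x), (U (-1) x y); split.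
  - exact: units_Ud.
  - by apply: units_U => //; apply: ltW.
  - exact: inv_Ud.
  - by apply: inv_U => //; apply: ltW.
  - by rewrite comm_base // ltW.
have [m [_ h2 r1 r2]] := reach_split2 nj r.
have p2 : (0 < 2 ^ n)%N by rewrite expn_gt0.
have xm := reach_pos p2 r1.
have my := reach_pos (leq_trans p2 h2) r2.
have xy := lt_trans xm my.
have nxm : x <> m by move=> e; rewrite e ltxx in xm.
have nmy : m <> y by move=> e; rewrite e ltxx in my.
have nxy : x <> y by move=> e; rewrite e ltxx in xy.
have [k1 [k10 U1]] := IH _ _ _ (leqnn _) r1.
have [k2 [k20 U2]] := IH _ _ _ h2 r2.
exists (k1 * k2); split; first by rewrite mulf_neq0.
apply: gen_in; last by case: (FI_U (k1 * k2) (ltW xy)).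
exists (U k1 x m), (U k2 m y), (U (-k1) x m), (U (-k2) m y); split => //.
- by apply: inv_U => //; apply: ltW.
- by apply: inv_U => //; apply: ltW.
- by rewrite comm_UU // ltW.
Qed.

Lemma length_exists (x0 : X) B : (forall C : seq X, is_chain C -> (size C <= B)%N) ->
  exists l, length_is X l.
Proof.
move=> HB.
pose P := fun n => `[< exists C : seq X, is_chain C /\ size C = n >].
have P1 : P 1%N.
  apply/asboolP; exists [:: x0]; split => //; split => //.
  by move=> u v; rewrite !inE => /eqP -> /eqP ->; rewrite lexx.
have exP : exists i, P i by exists 1%N.
have ubP : forall i, P i -> (i <= B)%N by move=> i /asboolP [C [cC <-]]; apply: HB.
case: (ex_maxnP exP ubP) => i /asboolP [C [cC sC]] maxi.
have i0 : (0 < i)%N by apply: maxi.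
exists i.-1; split.
  by exists C; split => //; rewrite prednK.
move=> D cD; rewrite prednK //; apply: maxi; apply/asboolP; by exists D.
Qed.

Lemma unbounded_reach : ~ (exists B, forall C : seq X, is_chain C -> (size C <= B)%N) ->
  forall N, exists (x y : X) j, (N <= j)%N /\ reach j x y.
Proof.
move=> nb N; have [C [cC sC]] : exists C : seq X, is_chain C /\ (N < size C)%N.
  apply: contra_notP nb => H; exists N => C cC; rewrite leqNgt; apply/negP => lt.
  by apply: H; exists C.
have e : size C = (size C).-1.+1 by rewrite prednK //; apply: leq_ltn_trans sC.
have [x [y r]] := chain_reach cC e.
by exists x, y, (size C).-1; split => //; rewrite -ltnS -e.
Qed.

Lemma log_facts l : let c := ceil_log2 l.+1 in
  (l < 2 ^ c)%N /\ forall m, (m < c)%N -> (2 ^ m <= l)%N.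
Proof.
move=> c; split; first exact: up_logP.
move=> m mc; rewrite leqNgt; apply/negP => lm.
have := up_log_min (isT : (1 < 2)%N) lm; rewrite -/(ceil_log2 _) -/c leqNgt mc.
by [].
Qed.

Lemma main1 (x0 : X) : lie_solvable X K ->
  exists l : nat, length_is X l /\
    dl_Lie_is X K (ceil_log2 l.+1).+1 /\ dl_Lie_assoc_is X K (ceil_log2 l.+1).+1.
Proof.
move=> [n Hn].
have dne : delta <> zerof.
  move=> /(congr1 (fun f => f x0 x0)); rewrite /Defs.delta /Defs.zerof eqxx.
  by move/eqP; rewrite oner_eq0.
have [bd|nb] := pselect (exists B, forall C : seq X, is_chain C -> (size C <= B)%N); last first.
  exfalso; case: n Hn => [|m] Hm.
    by apply: dne; apply: Hm; apply: FI_delta.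
  have [x [y [j [mj r]]]] := unbounded_reach nb (2 ^ m).
  by have := Hm _ (lie_der_lb mj r); apply/eqP; apply: Eu_neq0.
have [B HB] := bd; have [l Hl] := length_exists x0 HB.
exists l; split => //.
have [lc cmin] := log_facts l.
have [C [cC sC]] := proj1 Hl; have [x [y r]] := chain_reach cC sC.
split; split.
- move=> f /lie_der_P Pf; exact: Pk_zero Hl lc Pf.
- move=> m Hm; rewrite ltnNge; apply/negP => mc; move: Hm.
  case: m mc => [|m] mc Hm; first by apply: dne; apply: Hm; apply: FI_delta.
  have := Hm _ (lie_der_lb (cmin m mc) r); apply/eqP; apply: Eu_neq0.
- move=> f /lie_der_assoc_P Pf; exact: Pk_zero Hl lc Pf.
- move=> m Hm; rewrite ltnNge; apply/negP => mc; move: Hm.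
  case: m mc => [|m] mc Hm; first by apply: dne; apply: Hm; apply: FI_delta.
  have := Hm _ (lie_der_assoc_lb (cmin m mc) r); apply/eqP; apply: Eu_neq0.
Qed.

Lemma main2 (x0 : X) : units_solvable X K -> (exists a : K, a != 0 /\ a != 1) ->
  exists l : nat, length_is X l /\ dl_units_is X K (ceil_log2 l.+1).+1.
Proof.
move=> [n Hn] [a [a0 a1]].
have [bd|nb] := pselect (exists B, forall C : seq X, is_chain C -> (size C <= B)%N); last first.
  exfalso; case: n Hn => [|m] Hm.
    by apply: (@Ud_neq_delta a x0 a1); apply: Hm; apply: units_Ud.
  have [x [y [j [mj r]]]] := unbounded_reach nb (2 ^ m).
  have [k [k0 Uk]] := uder_lb a0 a1 mj r.
  have xy := reach_pos (leq_trans (expn_gt0 2 m) mj) r.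
  apply: (U_neq_delta (x:=x) (y:=y)) k0 _; last exact: Hm.
  by move=> e; rewrite e ltxx in xy.
have [B HB] := bd; have [l Hl] := length_exists x0 HB.
exists l; split => //.
have [lc cmin] := log_facts l.
have [C [cC sC]] := proj1 Hl; have [x [y r]] := chain_reach cC sC.
split.
- move=> f /uder_Q [Qf _]; exact: Qk_delta Hl lc Qf.
- move=> m Hm; rewrite ltnNge; apply/negP => mc; move: Hm.
  case: m mc => [|m] mc Hm.
    by apply: (@Ud_neq_delta a x0 a1); apply: Hm; apply: units_Ud.
  have [k [k0 Uk]] := uder_lb a0 a1 (cmin m mc) r.
  have xy := reach_pos (leq_trans (expn_gt0 2 m) (cmin m mc)) r.
  apply: (U_neq_delta (x:=x) (y:=y)) k0 _; last exact: Hm.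
  by move=> e; rewrite e ltxx in xy.
Qed.
End FIS.

Theorem corollary1p5 (d : Order.disp_t) (X : porderType d) (K : fieldType)
    (x0 : X) :
  (lie_solvable X K ->
     exists l : nat, length_is X l /\
       dl_Lie_is X K (ceil_log2 l.+1).+1 /\
       dl_Lie_assoc_is X K (ceil_log2 l.+1).+1) /\
  (units_solvable X K -> (exists a : K, a != 0%R /\ a != 1%R) ->
     exists l : nat, length_is X l /\
       dl_units_is X K (ceil_log2 l.+1).+1).
Proof.
split; first exact: main1.
exact: main2.
Qed.
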